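(* Consider the infinite-horizon adaptive learning forward guidance model below, for any integer $T\ge1$ and any $\bar i<0$. (i) If interest-rate expectations are credible, then $\partial x_0/\partial i_T=-\sigma\beta^T$ and $\partial\pi_0/\partial i_T=-\lambda\sigma\beta^T$; in particular there is no forward guidance puzzle. (ii) If interest-rate expectations are not credible, then $\partial x_0/\partial i_T=\partial\pi_0/\partial i_T=0$ for every $T$; in particular there is no forward guidance puzzle.
   Context: Parameters: $0<\beta<1$, $\xi\in(0,1)$, $\lambda:=(1-\xi\beta)(1-\xi)/\xi$, $\sigma>0$, $\psi>1$, gains $\gamma_{x,t},\gamma_{\pi,t},\gamma_{i,t}$. Model: $x_t=-\sigma i_t+\hat E_t\sum_{k\ge t}\beta^{k-t}\big((1-\beta)x_{k+1}+\sigma\pi_{k+1}-\sigma\beta i_{k+1}\big)$, $\pi_t=\lambda x_t+\hat E_t\sum_{k\ge t}(\xi\beta)^{k-t}\big(\xi\beta\lambda x_{k+1}+(1-\xi)\beta\pi_{k+1}\big)$, with $\hat E_t x_{k+1}=\hat E_t x_{t+1}=\gamma_{x,t}x_{t-1}+(1-\gamma_{x,t})\hat E_{t-1}x_t$ and $\hat E_t\pi_{k+1}=\hat E_t\pi_{t+1}=\gamma_{\pi,t}\pi_{t-1}+(1-\gamma_{\pi,t})\hat E_{t-1}\pi_t$ for all $k\ge t$; initial values $x_{-1},\pi_{-1},i_{-1},\hat E_{-1}x_0,\hat E_{-1}\pi_0,\hat E_{-1}i_0$ are given and do not depend on $\bar i$. Policy: $i_t=0$ for $t=0,\dots,T-1$,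 $i_T=\bar i<0$, $i_t=\psi\pi_t$ for $t>T$. Credible interest-rate expectations at $t=0$: $\hat E_0 i_{k+1}=0$ for $k=0,\dots,T-2$, $\hat E_0 i_{T}=\bar i$, and $\hat E_0 i_{k+1}=\gamma_{i,0}i_{-1}+(1-\gamma_{i,0})\hat E_{-1}i_0$ for $k\ge T$. Non-credible: $\hat E_0 i_{k+1}=\gamma_{i,0}i_{-1}+(1-\gamma_{i,0})\hat E_{-1}i_0$ for all $k\ge0$. $\partial/\partial i_T$ denotes the derivative with respect to $\bar i$. The forward guidance puzzle means $\lim_{T\to\infty}\partial\pi_0/\partial i_T=\lim_{T\to\infty}\partial x_0/\partial i_T=-\infty$. *)

(* Defs.v *)
From Stdlib Require Import Reals.
From Coquelicot Require Import Coquelicot.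
Open Scope R_scope.

Definition lam (beta xi : R) : R := (1 - xi * beta) * (1 - xi) / xi.

(* Adaptive-learning update: Ehat_t z_{t+1} = g * z_{t-1} + (1-g) * Ehat_{t-1} z_t *)
Definition adapt (g zprev Eprev : R) : R := g * zprev + (1 - g) * Eprev.

Definition policy_i (T : nat) (ibar psi : R) (pi : nat -> R) (t : nat) : R :=
  if (t <? T)%nat then 0 else if (t =? T)%nat then ibar else psi * pi t.

(* Credible time-0 expectations Ehat_0 i_{k+1}:
   0 for k+1 < T, ibar for k+1 = T, adaptive value Eadapt for k+1 > T. *)
Definition Ei_cred (T : nat) (ibar Eadapt : R) (k : nat) : R :=
  if (S k <? T)%nat then 0 else if (S k =? T)%nat then ibar else Eadapt.

Definition Ei_noncred (Eadapt : R) (k : nat) : R := Eadapt.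

(* Time-0 IS equation, with Ehat_0 x_{k+1} = Ex, Ehat_0 pi_{k+1} = Epi,
   Ehat_0 i_{k+1} = Ei k (all k >= 0):
   x_0 = -sigma i_0 + sum_{k>=0} beta^k ((1-beta) Ex + sigma Epi - sigma beta Ei k). *)
Definition IS_eq0 (beta sigma : R) (x0 i0 Ex Epi : R) (Ei : nat -> R) : Prop :=
  x0 = - sigma * i0
       + Series (fun k => beta ^ k * ((1 - beta) * Ex + sigma * Epi - sigma * beta * Ei k)).

Definition PC_eq0 (beta xi : R) (x0 pi0 Ex Epi : R) : Prop :=
  pi0 = lam beta xi * x0
        + Series (fun k => (xi * beta) ^ k
                   * (xi * beta * lam beta xi * Ex + (1 - xi) * beta * Epi)).

(* Forward guidance puzzle for the sequences (in T) of derivatives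
   dpi_0/di_T and dx_0/di_T: both tend to -infinity. *)
Definition FG_puzzle (dpi dx : nat -> R) : Prop :=
  is_lim_seq dpi m_infty /\ is_lim_seq dx m_infty.

(* Main.v *)
Require Import Defs.
From Stdlib Require Import Reals.
From Coquelicot Require Import Coquelicot.
Open Scope R_scope.

(* x T ib t, pi T ib t : output gap / inflation at time t when the guidance
   horizon is T and the announced rate is i_T = ib.  gx gpi gi : gains
   gamma_{x,t}, gamma_{pi,t}, gamma_{i,t}.  Initial values xm1 = x_{-1},
   pim1 = pi_{-1}, im1 = i_{-1}, Ex0 = Ehat_{-1} x_0, Epi0 = Ehat_{-1} pi_0,
   Ei0 = Ehat_{-1} i_0 (independent of ib and T). *)

From Stdlib Require Import Lia Lra.

Lemma ind_series (m : nat) (c : R) :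
  is_series (fun k => if (k =? m)%nat then c else 0) c.
Proof.
  set (d := (fun k => if (k =? m)%nat then c else 0)).
  assert (H0 : forall n, (n < m)%nat -> sum_n d n = 0).
  { induction n as [|n IH]; intros Hn.
    - rewrite sum_O. unfold d. destruct (Nat.eqb_spec 0 m); [lia|reflexivity].
    - rewrite sum_Sn, IH by lia. unfold d. destruct (Nat.eqb_spec (S n) m); [lia|].
      unfold plus; simpl. ring. }
  assert (H1 : forall n, sum_n d (m + n) = c).
  { induction n as [|n IH].
    - rewrite Nat.add_0_r. destruct m as [|m'].
      + rewrite sum_O. unfold d. simpl. reflexivity.
      + rewrite sum_Sn, H0 by lia. unfold d. rewrite Nat.eqb_refl. unfold plus; simpl. ring.
    - replace (m + S n)%nat with (S (m + n)) by lia. rewrite sum_Sn, IH. unfold d.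
      destruct (Nat.eqb_spec (S (m + n)) m); [lia|]. unfold plus; simpl. ring. }
  change (is_lim_seq (sum_n d) c).
  apply is_lim_seq_ext_loc with (fun _ => c); [|apply is_lim_seq_const].
  exists m. intros n Hn. replace n with (m + (n - m))%nat by lia. now rewrite H1.
Qed.

Lemma x_affine (beta sigma psi Ex Epi Eiad : R) (T : nat) (b x0 : R) (p : nat -> R) :
  0 < beta < 1 -> 0 < sigma -> (1 <= T)%nat ->
  IS_eq0 beta sigma x0 (policy_i T b psi p 0%nat) Ex Epi (Ei_cred T b Eiad) ->
  x0 = Series (fun k => beta ^ k * ((1 - beta) * Ex + sigma * Epi - sigma * beta * Ei_cred T 0 Eiad k))
       + (- sigma * beta ^ T) * b.
Proof.
  intros hb hs hT H. unfold IS_eq0 in H. rewrite H.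
  unfold policy_i. replace (0 <? T)%nat with true by (symmetry; apply Nat.ltb_lt; lia).
  set (A := (1 - beta) * Ex + sigma * Epi).
  set (v := (fun k => beta ^ k * (A - sigma * beta * Ei_cred T 0 Eiad k))).
  set (w := (fun k : nat => if (k =? pred T)%nat then - sigma * beta ^ T else 0)).
  assert (Hv : ex_series v).
  { apply (@ex_series_le R_AbsRing R_CompleteNormedModule) with (fun k => beta ^ k * (Rabs A + sigma * beta * Rabs Eiad)).
    - intros k. change (norm (v k)) with (Rabs (v k)). unfold v.
      rewrite Rabs_mult, (Rabs_pos_eq (beta ^ k)) by (apply pow_le; lra).
      apply Rmult_le_compat_l; [apply pow_le; lra|].
      eapply Rle_trans; [apply Rabs_triang|]. rewrite Rabs_Ropp.
      apply Rplus_le_compat_l. rewrite Rabs_mult, (Rabs_pos_eq (sigma * beta)).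
      2:{ apply Rlt_le, Rmult_lt_0_compat; lra. }
      apply Rmult_le_compat_l. { apply Rlt_le, Rmult_lt_0_compat; lra. }
      unfold Ei_cred. destruct (S k <? T)%nat; [rewrite Rabs_R0; apply Rabs_pos|].
      destruct (S k =? T)%nat; [rewrite Rabs_R0; apply Rabs_pos|lra].
    - apply ex_series_scal_r, ex_series_geom. rewrite Rabs_pos_eq; lra. }
  assert (Hw : is_series w (- sigma * beta ^ T)) by apply ind_series.
  rewrite (Series_ext _ (fun k => v k + b * w k)).
  - rewrite Series_plus; [| exact Hv |].
    + rewrite Series_scal_l, (is_series_unique _ _ Hw). ring.
    + apply (ex_series_scal_l b w). eexists; exact Hw.
  - intros k. unfold v, w, Ei_cred.
    destruct (Nat.ltb_spec (S k) T), (Nat.eqb_spec (S k) T), (Nat.eqb_spec k (pred T));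
      try lia; try ring.
    rewrite <- e. simpl. ring.
Qed.

Theorem proposition11
  (beta xi sigma psi : R) (gx gpi gi : nat -> R)
  (xm1 pim1 im1 Ex0 Epi0 Ei0 : R)
  (hbeta : 0 < beta < 1) (hxi : 0 < xi < 1) (hsigma : 0 < sigma) (hpsi : 1 < psi) :
  let Ex := adapt (gx 0%nat) xm1 Ex0 in
  let Epi := adapt (gpi 0%nat) pim1 Epi0 in
  let Eiad := adapt (gi 0%nat) im1 Ei0 in
  (* (i) credible interest-rate expectations *)
  (forall x pi : nat -> R -> nat -> R,
     (forall (T : nat) (ib : R), (1 <= T)%nat -> ib < 0 ->
        IS_eq0 beta sigma (x T ib 0%nat) (policy_i T ib psi (pi T ib) 0%nat)
               Ex Epi (Ei_cred T ib Eiad)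
        /\ PC_eq0 beta xi (x T ib 0%nat) (pi T ib 0%nat) Ex Epi) ->
     (forall (T : nat) (ib : R), (1 <= T)%nat -> ib < 0 ->
        is_derive (fun b => x T b 0%nat) ib (- sigma * beta ^ T)
        /\ is_derive (fun b => pi T b 0%nat) ib (- lam beta xi * sigma * beta ^ T))
     /\ (forall ib : R, ib < 0 ->
        ~ FG_puzzle (fun T => Derive (fun b => pi T b 0%nat) ib)
                    (fun T => Derive (fun b => x T b 0%nat) ib)))
  /\
  (* (ii) non-credible interest-rate expectations *)
  (forall x pi : nat -> R -> nat -> R,
     (forall (T : nat) (ib : R), (1 <= T)%nat -> ib < 0 ->
        IS_eq0 beta sigma (x T ib 0%nat) (policy_i T ib psi (pi T ib) 0%nat)
               Ex Epi (Ei_noncred Eiad)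
        /\ PC_eq0 beta xi (x T ib 0%nat) (pi T ib 0%nat) Ex Epi) ->
     (forall (T : nat) (ib : R), (1 <= T)%nat -> ib < 0 ->
        is_derive (fun b => x T b 0%nat) ib 0
        /\ is_derive (fun b => pi T b 0%nat) ib 0)
     /\ (forall ib : R, ib < 0 ->
        ~ FG_puzzle (fun T => Derive (fun b => pi T b 0%nat) ib)
                    (fun T => Derive (fun b => x T b 0%nat) ib))).
Proof.
  intros Ex Epi Eiad.
  assert (pol0 : forall T b p, (1 <= T)%nat -> policy_i T b psi p 0%nat = 0).
  { intros T b p hT. unfold policy_i.
    replace (0 <? T)%nat with true by (symmetry; apply Nat.ltb_lt; lia). reflexivity. }
  split; intros x pi H.
  - assert (D : forall T ib, (1 <= T)%nat -> ib < 0 ->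
        is_derive (fun b => x T b 0%nat) ib (- sigma * beta ^ T)
        /\ is_derive (fun b => pi T b 0%nat) ib (- lam beta xi * sigma * beta ^ T)).
    { intros T ib hT hib.
      pose (K := Series (fun k => beta ^ k * ((1 - beta) * Ex + sigma * Epi
                    - sigma * beta * Ei_cred T 0 Eiad k))).
      pose (S2 := Series (fun k => (xi * beta) ^ k
                   * (xi * beta * lam beta xi * Ex + (1 - xi) * beta * Epi))).
      assert (Hloc : locally ib (fun t => t < 0)) by (apply open_lt; exact hib).
      assert (Hx : forall t, t < 0 -> x T t 0%nat = K + (- sigma * beta ^ T) * t).
      { intros t ht. destruct (H T t hT ht) as [H1 _].
        exact (x_affine beta sigma psi Ex Epi Eiad T t _ (pi T t) hbeta hsigma hT H1). }
      assert (Hp : forall t, t < 0 -> pi T t 0%nat = lam beta xi * (K + (- sigma * beta ^ T) * t) + S2).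
      { intros t ht. destruct (H T t hT ht) as [_ H2]. unfold PC_eq0 in H2.
        rewrite H2, (Hx t ht). reflexivity. }
      split.
      + apply is_derive_ext_loc with (fun t => K + (- sigma * beta ^ T) * t).
        * eapply filter_imp; [|exact Hloc]. intros t ht. symmetry; now apply Hx.
        * auto_derive; [exact I | ring].
      + apply is_derive_ext_loc with (fun t => lam beta xi * (K + (- sigma * beta ^ T) * t) + S2).
        * eapply filter_imp; [|exact Hloc]. intros t ht. symmetry; now apply Hp.
        * auto_derive; [exact I | ring]. }
    split; [exact D|].
    intros ib hib [_ Hlim]. apply is_lim_seq_spec in Hlim. destruct (Hlim (- sigma)) as [N HN].
    specialize (HN (S N) (le_S _ _ (le_n N))). cbv beta in HN.
    assert (E : Derive (fun b => x (S N) b 0%nat) ib = - sigma * beta ^ (S N))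
      by (apply is_derive_unique; apply (D (S N) ib ltac:(lia) hib)).
    rewrite E in HN.
    pose proof (pow_lt_1_compat beta (S N) ltac:(lra) ltac:(lia)). nra.
  - assert (D : forall T ib, (1 <= T)%nat -> ib < 0 ->
        is_derive (fun b => x T b 0%nat) ib 0
        /\ is_derive (fun b => pi T b 0%nat) ib 0).
    { intros T ib hT hib.
      pose (K := Series (fun k => beta ^ k * ((1 - beta) * Ex + sigma * Epi
                    - sigma * beta * Ei_noncred Eiad k))).
      pose (S2 := Series (fun k => (xi * beta) ^ k
                   * (xi * beta * lam beta xi * Ex + (1 - xi) * beta * Epi))).
      assert (Hloc : locally ib (fun t => t < 0)) by (apply open_lt; exact hib).
      assert (Hx : forall t, t < 0 -> x T t 0%nat = K).
      { intros t ht. destruct (H T t hT ht) as [H1 _]. unfold IS_eq0 in H1.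
        rewrite H1, pol0 by exact hT. unfold K. ring. }
      assert (Hp : forall t, t < 0 -> pi T t 0%nat = lam beta xi * K + S2).
      { intros t ht. destruct (H T t hT ht) as [_ H2]. unfold PC_eq0 in H2.
        rewrite H2, (Hx t ht). reflexivity. }
      split.
      + apply is_derive_ext_loc with (fun t => K).
        * eapply filter_imp; [|exact Hloc]. intros t ht. symmetry; now apply Hx.
        * auto_derive; [exact I | ring].
      + apply is_derive_ext_loc with (fun t => lam beta xi * K + S2).
        * eapply filter_imp; [|exact Hloc]. intros t ht. symmetry; now apply Hp.
        * auto_derive; [exact I | ring]. }
    split; [exact D|].
    intros ib hib [_ Hlim]. apply is_lim_seq_spec in Hlim. destruct (Hlim (- 1)) as [N HN].
    specialize (HN (S N) (le_S _ _ (le_n N))). cbv beta in HN.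
    assert (E : Derive (fun b => x (S N) b 0%nat) ib = 0)
      by (apply is_derive_unique; apply (D (S N) ib ltac:(lia) hib)).
    rewrite E in HN. lra.
Qed.
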